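(* (i) For every integer $n\ge 2$ there exists a graph $G$ with $B_{dom}(G)=n$. (ii) There exist graphs $G$ and $H$ with the same dominated chromatic number for which $|B_{dom}(G)-B_{dom}(H)|$ is arbitrarily large; that is, for every positive integer $N$ there exist graphs $G,H$ with $\chi_{dom}(G)=\chi_{dom}(H)$ and $|B_{dom}(G)-B_{dom}(H)|\ge N$.
   Context: A dominated coloring of a graph is a proper coloring in which every color class is dominated by at least one vertex, i.e. for each color class $C$ there is a vertex adjacent to every vertex of $C$; $\chi_{dom}(G)$ is the minimum number of colors in a dominated coloring. The dom-bondage number $B_{dom}(G)$ is the minimum number of edges of $G$ whose removal changes the dominated chromatic number of $G$. *)

(* Defs.v *)
From mathcomp Require Import all_boot.
Set Implicit Arguments. Unset Strict Implicit. Unset Printing Implicit Defensive.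

Section Graphs.
Variable T : finType.

Definition simple_graph (e : rel T) : Prop :=
  symmetric e /\ irreflexive e.

Definition edges (e : rel T) : {set {set T}} :=
  [set A : {set T} | [exists x : T, exists y : T, e x y && (A == [set x; y])]].

Definition remove_edges (e : rel T) (F : {set {set T}}) : rel T :=
  fun x y => e x y && ([set x; y] \notin F).

Definition no_isolated (e : rel T) : Prop :=
  forall x : T, exists y : T, e x y.

Definition dominated_coloring (e : rel T) (k : nat) (c : T -> 'I_k) : Prop :=
  (forall x y : T, e x y -> c x != c y) /\
  (forall i : 'I_k, exists v : T, forall x : T, c x = i -> e v x).

Definition is_chi_dom (e : rel T) (k : nat) : Prop :=
  (exists c : T -> 'I_k, dominated_coloring e c) /\
  (forall k', k' < k -> forall c : T -> 'I_k', ~ dominated_coloring e c).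

(* B_dom(G) = b : minimum number of edges whose removal changes chi_dom
   (removals are required to leave a graph without isolated vertices, so that
   chi_dom of the resulting graph is defined) *)
Definition is_Bdom (e : rel T) (b : nat) : Prop :=
  (exists F : {set {set T}},
      [/\ F \subset edges e, #|F| = b, no_isolated (remove_edges e F) &
          exists k k', [/\ is_chi_dom e k, is_chi_dom (remove_edges e F) k' & k <> k']])
  /\
  (forall F : {set {set T}}, F \subset edges e -> #|F| < b ->
      no_isolated (remove_edges e F) ->
      forall k k', is_chi_dom e k -> is_chi_dom (remove_edges e F) k' -> k = k').

End Graphs.

(* Main.v *)
From Stdlib Require Import Classical.
Require Import Defs.
From mathcomp Require Import all_boot.
From mathcomp Require Import zify.

Section Gen.
Variable T : finType.

Lemma chi_lb (x0 : T) (r : rel T) : irreflexive r ->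
  forall k, k < 2 -> forall c : T -> 'I_k, ~ dominated_coloring r c.
Proof.
move=> irr [|[|k]] // _ c [_ H].
- by case: (c x0).
- case: (H ord0) => v Hv.
  have E : c v = ord0 by apply/val_inj; case: (c v) => [[|]].
  by move: (Hv v E); rewrite irr.
Qed.

Lemma chi2 (x0 : T) (r : rel T) : irreflexive r ->
  (exists c : T -> 'I_2, dominated_coloring r c) -> is_chi_dom r 2.
Proof. move=> irr H; split => // k Hk c; exact: chi_lb x0 r irr k Hk c. Qed.

Lemma chi_uniq (r : rel T) k k' : is_chi_dom r k -> is_chi_dom r k' -> k = k'.
Proof.
case=> [[c Hc] Hk] [[c' Hc'] Hk'].
case: (ltngtP k k') => // H.
- by case: (Hk' _ H c).
- by case: (Hk _ H c').
Qed.

Lemma chi_ex (r : rel T) : symmetric r -> irreflexive r -> no_isolated r ->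
  exists k, is_chi_dom r k.
Proof.
move=> sym irr noiso.
suff H: forall m, (exists c : T -> 'I_m, dominated_coloring r c) ->
   exists k, is_chi_dom r k.
  apply: (H #|T|); exists enum_rank; split.
    move=> x y rxy; apply/negP => /eqP /enum_rank_inj Exy.
    by rewrite Exy irr in rxy.
  move=> i; case: (noiso (enum_val i)) => v Hv.
  exists v => z Hz.
  have ->: z = enum_val i by rewrite -Hz enum_rankK.
  by rewrite sym.
elim/ltn_ind => m IH [c Hc].
case: (classic (exists k, k < m /\ exists c : T -> 'I_k, dominated_coloring r c))
  => [[k [Hk Hc']] | Hno].
- exact: (IH k Hk Hc').
- exists m; split; first by exists c.
  move=> k Hk c' Hc'; apply: Hno; exists k; split => //; by exists c'.
Qed.

End Gen.

Section KK.
Variable m : nat.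
Definition V := (bool * 'I_m.+2)%type.
Definition K : rel V := fun x y => x.1 != y.1.
Definition Fm : {set {set V}} := [set [set (false, i); (true, i)] | i : 'I_m.+2].

Lemma ord2 (i : 'I_2) : i = ord0 \/ i = ord_max.
Proof.
case: i => [[|[|k]] Hi]; [left|right|by []]; exact: val_inj.
Qed.

Lemma inFm (x y : V) : x.1 != y.1 -> ([set x; y] \in Fm) = (x.2 == y.2).
Proof.
move=> H; apply/imsetP/eqP.
- case=> i _ E.
  have hx : x \in [set x; y] := set21 x y.
  have hy : y \in [set x; y] := set22 x y.
  rewrite E !inE in hx hy.
  by case/orP: hx => /eqP ->; case/orP: hy => /eqP ->.
- case: x y H => [a i] [b j] /= H ->.
  exists j => //.
  by case: a b H => [] [] //= _; rewrite setUC.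
Qed.

Lemma rE (x y : V) : remove_edges K Fm x y = (x.1 != y.1) && (x.2 != y.2).
Proof.
rewrite /remove_edges /K; case H: (x.1 != y.1) => //=.
by rewrite inFm ?H.
Qed.

Lemma card_Fm : #|Fm| = m.+2.
Proof.
rewrite card_imset ?card_ord // => i j E.
have: (false, i) \in [set (false, j); (true, j)] by rewrite -E set21.
by rewrite !inE !xpair_eqE /= orbF => /eqP.
Qed.

Lemma no2col (c : V -> 'I_2) : ~ dominated_coloring (remove_edges K Fm) c.
Proof.
case=> _ H.
case: (H ord0) => v0 H0; case: (H ord_max) => v1 H1.
have c0 : c v0 = ord_max.
  case: (ord2 (c v0)) => // E; by move: (H0 v0 E); rewrite rE eqxx.
have c1 : c v1 = ord0.
  case: (ord2 (c v1)) => // E; by move: (H1 v1 E); rewrite rE eqxx.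
move: (H1 v0 c0); rewrite rE => /andP [_ h2].
case: (ord2 (c (v1.1, v0.2))) => E.
- by move: (H0 _ E); rewrite rE /= eqxx andbF.
- by move: (H1 _ E); rewrite rE /= eqxx.
Qed.

Lemma untouched (F : {set {set V}}) : #|F| < m.+2 -> forall s : bool,
  exists i, forall j, [set (s, i); (~~ s, j)] \notin F.
Proof.
move=> Fc s.
have ns : (s == ~~ s) = false by case: s.
pose idx := fun A : {set V} => odflt ord0 [pick i | (s, i) \in A].
pose S := [set i | [exists j, [set (s, i); (~~ s, j)] \in F]].
have sub : S \subset idx @: F.
  apply/subsetP => i; rewrite inE => /existsP [j Hj].
  apply/imsetP; exists [set (s, i); (~~ s, j)] => //.
  rewrite /idx; case: pickP => [i' | ] /=.
    by rewrite !inE !xpair_eqE eqxx ns /= orbF => /eqP.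
  by move/(_ i); rewrite !inE eqxx.
have cS : #|S| < m.+2.
  apply: leq_ltn_trans Fc.
  exact: leq_trans (subset_leq_card sub) (leq_imset_card _ _).
case: (pickP (fun i => i \notin S)) => [i Hi | Hn].
- exists i => j; apply: contra Hi => Hj; rewrite inE; apply/existsP; by exists j.
- have : S = setT.
    by apply/setP => i; rewrite in_setT; apply: negbFE; exact: Hn i.
  by move=> ES; rewrite ES cardsT card_ord ltnn in cS.
Qed.

Lemma Kcol (r : rel V) : (forall x y, r x y -> x.1 != y.1) ->
  (forall s, exists i, forall j, r (s, i) (~~ s, j)) ->
  exists c : V -> 'I_2, dominated_coloring r c.
Proof.
move=> Hr Hs.
exists (fun x : V => if x.1 then ord_max else ord0); split.
  move=> x y /Hr; by case: x y => [[] a] [[] b].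
move=> i; case: (ord2 i) => ->.
- case: (Hs true) => i1 Hi1; exists (true, i1) => [[b j]] /=.
  by case: b => //= /(congr1 val).
- case: (Hs false) => i1 Hi1; exists (false, i1) => [[b j]] /=.
  by case: b => //= /(congr1 val).
Qed.

Lemma noiso : no_isolated (remove_edges K Fm).
Proof.
move=> [s i]; exists (~~ s, if i == ord0 then ord_max else ord0).
rewrite rE /=; apply/andP; split; first by case: s.
by case: (i =P ord0) => [->|/eqP] //.
Qed.

Lemma K_chi : is_chi_dom K 2.
Proof.
apply: (@chi2 _ ((false, ord0) : V)); first by move=> x; rewrite /K eqxx.
apply: Kcol => // s; exists ord0 => j; rewrite /K; by case: s.
Qed.

Lemma Bdom_K : is_Bdom K m.+2.
Proof.
split.
- exists Fm; split.
  + apply/subsetP => A /imsetP [i _ ->]; rewrite inE.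
    apply/existsP; exists (false, i); apply/existsP; exists (true, i).
    by rewrite eqxx.
  + exact: card_Fm.
  + exact: noiso.
  + have [k' Hk'] : exists k, is_chi_dom (remove_edges K Fm) k.
      apply: chi_ex; last exact: noiso.
      * by move=> x y; rewrite !rE eq_sym [y.2 == _]eq_sym.
      * by move=> x; rewrite rE eqxx.
    exists 2, k'; split => //; first exact: K_chi.
    move=> E; subst k'; case: Hk' => [[Hc0 Hc] _]; exact: (no2col Hc0 Hc).
- move=> F _ Fc _ k k' Hk Hk'.
  rewrite (@chi_uniq V _ _ _ Hk K_chi).
  suff H2 : is_chi_dom (remove_edges K F) 2 by rewrite (@chi_uniq V _ _ _ Hk' H2).
  apply: (@chi2 _ ((false, ord0) : V)); first by move=> x; rewrite /remove_edges /K eqxx.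
  apply: Kcol; first by move=> x y /andP [].
  move=> s; have [i Hi] := untouched F Fc s; exists i => j.
  by rewrite /remove_edges Hi /K andbT; clear Hi; case: s.
Qed.

End KK.

Lemma K_simple m : simple_graph (K m).
Proof.
split; first by move=> x y; rewrite /K eq_sym.
by move=> x; rewrite /K eqxx.
Qed.

Theorem mainTheorem15 :
  (forall n : nat, 2 <= n ->
     exists (T : finType) (e : rel T), simple_graph e /\ is_Bdom e n) /\
  (forall N : nat, 0 < N ->
     exists (T1 : finType) (e1 : rel T1) (T2 : finType) (e2 : rel T2) (k b1 b2 : nat),
       [/\ simple_graph e1 /\ simple_graph e2, is_chi_dom e1 k, is_chi_dom e2 k,
           is_Bdom e1 b1 /\ is_Bdom e2 b2 & N <= maxn b1 b2 - minn b1 b2]).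
Proof.
split.
- move=> [|[|m]] // _; exists (V m), (@K m); split; [exact: K_simple | exact: Bdom_K].
- move=> N _; exists (V 0), (@K 0), (V N), (@K N), 2, 2, N.+2; split.
  + split; exact: K_simple.
  + exact: K_chi.
  + exact: K_chi.
  + split; [exact: (Bdom_K 0) | exact: Bdom_K].
  + lia.
Qed.
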